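(* Let $\mathcal{X}$ be a nonempty convex subset of $\mathbb{R}^n$ and $\mathbf{F}$ a convex interval-valued function on $\mathcal{X}$. Then for every $\bar{x}\in\mathcal{X}$, $\partial\mathbf{F}(\bar{x})$ is closed, i.e., whenever a sequence $\{\widehat{\mathbf{G}}_k\}\subseteq\partial\mathbf{F}(\bar{x})$ converges to $\widehat{\mathbf{G}}\in I(\mathbb{R})^n$, then $\widehat{\mathbf{G}}\in\partial\mathbf{F}(\bar{x})$.
   Context: $I(\mathbb{R})$: nonempty compact intervals $\mathbf{A}=[\underline{a},\overline{a}]$; $\mathbf{A}\oplus\mathbf{B}=[\underline{a}+\underline{b},\overline{a}+\overline{b}]$; $\lambda\odot\mathbf{A}=[\min\{\lambda\underline{a},\lambda\overline{a}\},\max\{\lambda\underline{a},\lambda\overline{a}\}]$; $\mathbf{A}\ominus_{gH}\mathbf{B}=[\min\{\underline{a}-\underline{b},\overline{a}-\overline{b}\},\max\{\underline{a}-\underline{b},\overline{a}-\overline{b}\}]$, applied componentwise on $I(\mathbb{R})^n$; $\mathbf{A}\preceq\mathbf{B}$ iff $\underline{a}\le\underline{b}$ and $\overline{a}\le\overline{b}$; $\|\mathbf{A}\|_{I(\mathbb{R})}=\max\{|\underline{a}|,|\overline{a}|\}$; $\|\widehat{\mathbf{A}}\|_{I(\mathbb{R})^n}=\sqrt{\sum_i\|\mathbf{A}_i\|_{I(\mathbb{R})}^2}$. A sequence $\widehat{\mathbf{G}}_k$ converges to $\widehat{\mathbf{G}}$ if $\|\widehat{\mathbf{G}}_k\ominus_{gH}\widehat{\mathbf{G}}\|_{I(\mathbb{R})^n}\to0$.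 $d^T\odot\widehat{\mathbf{A}}=\bigoplus_i d_i\odot\mathbf{A}_i$. Convex IVF: $\mathbf{F}(\lambda x_1+(1-\lambda)x_2)\preceq\lambda\odot\mathbf{F}(x_1)\oplus(1-\lambda)\odot\mathbf{F}(x_2)$. $gH$-subgradient at $\bar{x}$: $\widehat{\mathbf{G}}\in I(\mathbb{R})^n$ with $(x-\bar{x})^T\odot\widehat{\mathbf{G}}\preceq\mathbf{F}(x)\ominus_{gH}\mathbf{F}(\bar{x})$ for all $x\in\mathcal{X}$; $\partial\mathbf{F}(\bar{x})$ is their set. *)

(* Defs.v *)
From HB Require Import structures.
From mathcomp Require Import all_boot all_order all_algebra.
From mathcomp Require Import all_classical all_reals all_analysis.
Import numFieldNormedType.Exports.
Set Implicit Arguments. Unset Strict Implicit. Unset Printing Implicit Defensive.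
Import Order.TTheory GRing.Theory Num.Theory.
Local Open Scope ring_scope.
Local Open Scope classical_set_scope.

Section IntervalAnalysis.
Variable R : realType.

Record Ival := mkIval { ilo : R; ihi : R; ival_wf : ilo <= ihi }.

Definition iadd (A B : Ival) : Ival.
Proof. refine (@mkIval (ilo A + ilo B) (ihi A + ihi B) _).
  by apply: lerD; apply: ival_wf. Defined.

Definition iscal (l : R) (A : Ival) : Ival.
Proof. refine (@mkIval (Num.min (l * ilo A) (l * ihi A))
                       (Num.max (l * ilo A) (l * ihi A)) _).
  by rewrite ge_min !le_max !lexx. Defined.

Definition igH (A B : Ival) : Ival.
Proof. refine (@mkIval (Num.min (ilo A - ilo B) (ihi A - ihi B))
                       (Num.max (ilo A - ilo B) (ihi A - ihi B)) _).
  by rewrite ge_min !le_max !lexx. Defined.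

Definition ile (A B : Ival) : Prop := ilo A <= ilo B /\ ihi A <= ihi B.

Definition inorm (A : Ival) : R := Num.max `|ilo A| `|ihi A|.

Definition izero : Ival := @mkIval 0 0 (lexx 0).

Definition IvalVec (n : nat) := 'I_n -> Ival.

Definition igHvec n (G H : IvalVec n) : IvalVec n := fun i => igH (G i) (H i).

Definition ivnorm n (G : IvalVec n) : R :=
  Num.sqrt (\sum_(i < n) inorm (G i) ^+ 2).

Definition idot n (d : 'I_n -> R) (G : IvalVec n) : Ival :=
  \big[iadd/izero]_(i < n) iscal (d i) (G i).

Definition ivcvg n (Gs : nat -> IvalVec n) (G : IvalVec n) : Prop :=
  (fun k => ivnorm (igHvec (Gs k) G)) @ \oo --> (0 : R).

Definition convex_setRn n (X : set ('I_n -> R)) : Prop :=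
  forall x1 x2 (l : R), X x1 -> X x2 -> 0 <= l <= 1 ->
    X (fun i => l * x1 i + (1 - l) * x2 i).

Definition convex_ivf n (X : set ('I_n -> R)) (F : ('I_n -> R) -> Ival) : Prop :=
  forall x1 x2 (l : R), X x1 -> X x2 -> 0 <= l <= 1 ->
    ile (F (fun i => l * x1 i + (1 - l) * x2 i))
        (iadd (iscal l (F x1)) (iscal (1 - l) (F x2))).

Definition gH_subdiff n (X : set ('I_n -> R)) (F : ('I_n -> R) -> Ival)
  (xbar : 'I_n -> R) : set (IvalVec n) :=
  [set G | forall x, X x -> ile (idot (fun i => x i - xbar i) G) (igH (F x) (F xbar))].

End IntervalAnalysis.

(* Main.v *)
Require Import Defs.
From HB Require Import structures.
From mathcomp Require Import all_boot all_order all_algebra.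
From mathcomp Require Import all_classical all_reals all_analysis.
From mathcomp Require Import lra.
Import numFieldNormedType.Exports.
Import Order.TTheory GRing.Theory Num.Theory.
Local Open Scope ring_scope.
Local Open Scope classical_set_scope.

Section Aux.
Variable R : realType.

Lemma min_lip (a b c d e : R) : `|a - c| <= e -> `|b - d| <= e ->
  Num.min a b <= Num.min c d + e.
Proof.
rewrite !ler_norml => /andP[h1 h2] /andP[h3 h4].
have [h|h] := leP c d.
- rewrite ge_min; apply/orP; left; lra.
- rewrite ge_min; apply/orP; right; lra.
Qed.

Lemma max_lip (a b c d e : R) : `|a - c| <= e -> `|b - d| <= e ->
  Num.max a b <= Num.max c d + e.
Proof.
rewrite !ler_norml => /andP[h1 h2] /andP[h3 h4].
have [h|h] := leP c d.
- rewrite ge_max; apply/andP; split; lra.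
- rewrite ge_max; apply/andP; split; lra.
Qed.

Lemma abs_le_minmax (a b : R) :
  `|a| <= Num.max `|Num.min a b| `|Num.max a b| /\
  `|b| <= Num.max `|Num.min a b| `|Num.max a b|.
Proof.
have [h|h] := leP a b.
- by rewrite !le_max !lexx /= orbT.
- by rewrite !le_max !lexx /= orbT.
Qed.

Lemma ilo_big n (f : 'I_n -> Ival R) :
  ilo (\big[@iadd R/izero R]_(i < n) f i) = \sum_(i < n) ilo (f i).
Proof. by apply: (big_morph (@ilo R)). Qed.

Lemma ihi_big n (f : 'I_n -> Ival R) :
  ihi (\big[@iadd R/izero R]_(i < n) f i) = \sum_(i < n) ihi (f i).
Proof. by apply: (big_morph (@ihi R)). Qed.

Lemma inorm_le n (G : IvalVec R n) i : inorm (G i) <= ivnorm G.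
Proof.
rewrite /ivnorm.
have h0 : 0 <= inorm (G i) by rewrite /inorm le_max normr_ge0.
rewrite -(ger0_norm h0) -sqrtr_sqr ler_sqrt; last first.
  by apply: sumr_ge0 => j _; rewrite sqr_ge0.
rewrite (bigD1 i) //= lerDl; apply: sumr_ge0 => j _; by rewrite sqr_ge0.
Qed.

Lemma comp_bound n (A B : IvalVec R n) i :
  `|ilo (A i) - ilo (B i)| <= ivnorm (igHvec A B) /\
  `|ihi (A i) - ihi (B i)| <= ivnorm (igHvec A B).
Proof.
have := @inorm_le n (igHvec A B) i.
rewrite /inorm /igHvec /igH /=.
have [h1 h2] := abs_le_minmax (ilo (A i) - ilo (B i)) (ihi (A i) - ihi (B i)).
by move=> h; split; [apply: le_trans h1 h | apply: le_trans h2 h].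
Qed.

Lemma scal_bound (d : R) (x y D : R) : `|x - y| <= D -> `|d * x - d * y| <= `|d| * D.
Proof. by move=> h; rewrite -mulrBr normrM ler_wpM2l. Qed.

End Aux.

Theorem mainTheorem11 (R : realType) (n : nat) (X : set ('I_n -> R))
  (F : ('I_n -> R) -> Ival R) :
  X !=set0 -> convex_setRn X -> convex_ivf X F ->
  forall xbar : 'I_n -> R, X xbar ->
  forall (Gs : nat -> IvalVec R n) (G : IvalVec R n),
    (forall k, gH_subdiff X F xbar (Gs k)) ->
    ivcvg Gs G ->
    gH_subdiff X F xbar G.
Proof.
move=> _ _ _ xbar _ Gs G HGs Hcv x Xx.
set d := fun i => x i - xbar i.
set M := \sum_(i < n) `|d i|.
have M0 : 0 <= M by apply: sumr_ge0 => i _.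
set D := fun k => ivnorm (igHvec (Gs k) G).
have key : forall k,
  ilo (idot d G) <= ilo (idot d (Gs k)) + M * D k /\
  ihi (idot d G) <= ihi (idot d (Gs k)) + M * D k.
  move=> k; rewrite /idot !ilo_big !ihi_big /M mulr_suml -!big_split /=.
  split; apply: ler_sum => i _ /=;
    have [h1 h2] := @comp_bound R n (Gs k) G i; rewrite distrC in h1; rewrite distrC in h2.
  - apply: min_lip; exact: scal_bound.
  - apply: max_lip; exact: scal_bound.
have M1 : 0 < M + 1 by lra.
have main : forall e, 0 < e -> exists k, M * D k <= e.
  move=> e e0.
  have eps0 : 0 < e / (M + 1) by apply: divr_gt0.
  have [N _ HN] := @cvgr0_norm_lt _ _ _ _ _ D Hcv _ eps0.
  exists N; have := HN N (leqnn N); rewrite /= => hN.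
  have hD : D N <= `|D N| := ler_norm _.
  have Heq : (M + 1) * (e / (M + 1)) = e.
    by rewrite mulrC -mulrA mulVf ?mulr1 // gt_eqF.
  have hD0 : 0 <= D N by rewrite /D /ivnorm sqrtr_ge0.
  nra.
have [Hlo Hhi] : (ilo (idot d G) <= ilo (igH (F x) (F xbar))) /\ (ihi (idot d G) <= ihi (igH (F x) (F xbar))).
  split; apply/ler_addgt0Pr => e e0; have [k hk] := main e e0;
    have [k1 k2] := key k; have [g1 g2] := HGs k x Xx; lra.
by split.
Qed.
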